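(* Let $q$ be a prime power and let $X$ be any polarity graph of the generalized quadrangle $W(q)$ (loops at absolute points retained). Then every independent set $S$ of $X$ satisfies \[ |S|\le \frac{\sqrt{2q}+\sqrt{2q+4(q^2+1)\frac{q+\sqrt{2q}+1}{q^3+q^2+q+1}}}{2\,\frac{q+\sqrt{2q}+1}{q^3+q^2+q+1}}. \]
   Context: $W(q)$ is the symplectic generalized quadrangle: its points are the $q^3+q^2+q+1$ points of $PG(3,q)$ and its lines are the $q^3+q^2+q+1$ lines of $PG(3,q)$ that are totally isotropic for a fixed nondegenerate alternating form, with incidence being containment; each point lies on $q+1$ lines, each line has $q+1$ points. A polarity is an incidence-preserving bijection $\sigma$ mapping points to lines and lines to points with $\sigma^2$ the identity. The polarity graph has the points as vertices, with $x$ adjacent to $y$ iff $x$ is incident with $\sigma(y)$; points incident with their own image are absolute and carry loops. An independent set is a set of vertices no two distinct members of which are adjacent (absolute points may belong to it). *)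

(* Defs.v *)
From HB Require Import structures.
From mathcomp Require Import all_boot all_order all_algebra all_field.
From Stdlib Require Reals.

Set Implicit Arguments.
Unset Strict Implicit.
Unset Printing Implicit Defensive.

Import GRing.Theory.
Local Open Scope ring_scope.

Section SymplecticGQ.
Variable F : finFieldType.

(* vectors of F^4; projective points / lines of PG(3,F) are the
   1- resp. 2-dimensional subspaces, represented as their sets of vectors *)
Definition is_point (P : {set 'rV[F]_4}) : bool :=
  [exists v : 'rV[F]_4, (v != 0) && (P == [set a *: v | a : F])].

Definition bform (J : 'M[F]_4) (x y : 'rV[F]_4) : 'M[F]_1 := x *m J *m y^T.

Definition nondeg_alternating (J : 'M[F]_4) : Prop :=
  (forall x : 'rV[F]_4, bform J x x = 0) /\ J \in unitmx.

Definition is_line (J : 'M[F]_4) (L : {set 'rV[F]_4}) : bool :=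
  [exists u : 'rV[F]_4, exists v : 'rV[F]_4,
     (\rank (col_mx u v) == 2)%N && (L == [set a *: u + b *: v | a : F, b : F])]
  && [forall x in L, forall y in L, bform J x y == 0].

Definition point := {P : {set 'rV[F]_4} | is_point P}.
Definition line (J : 'M[F]_4) := {L : {set 'rV[F]_4} | is_line J L}.

Definition incident (J : 'M[F]_4) (p : point) (l : line J) : bool :=
  val p \subset val l.

Definition polarity (J : 'M[F]_4) (sp : point -> line J) (sl : line J -> point)
  : Prop :=
  (forall p, sl (sp p) = p) /\ (forall l, sp (sl l) = l) /\
  (forall (p : point) (l : line J), incident p l <-> incident (sl l) (sp p)).

Definition pol_adj (J : 'M[F]_4) (sp : point -> line J) (x y : point) : bool :=
  incident x (sp y).

Definition pol_independent (J : 'M[F]_4) (sp : point -> line J)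
  (S : {set point}) : Prop :=
  forall x y, x \in S -> y \in S -> x != y -> ~~ pol_adj sp x y.

End SymplecticGQ.

Section Bound.
Import Reals.
Local Open Scope R_scope.

Definition wq_bound (q : nat) : R :=
  let r := INR q in
  let c := (r + sqrt (2 * r) + 1) / (r ^ 3 + r ^ 2 + r + 1) in
  (sqrt (2 * r) + sqrt (2 * r + 4 * (r ^ 2 + 1) * c)) / (2 * c).
End Bound.

(* Main.v *)
Require Import Defs.
From HB Require Import structures.
From mathcomp Require Import all_boot all_order all_algebra all_field.
Module StdPart.
From Stdlib Require Import Reals Lra Lia Psatz.
Open Scope R_scope.

Lemma quad_root (c b m s : R) : 0 < c -> 0 <= b -> 0 <= m ->
  c * s * s - b * s - m <= 0 ->
  s <= (b + sqrt (b * b + 4 * m * c)) / (2 * c).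
Proof.
intros hc hb hm h.
set D := b * b + 4 * m * c.
assert (hD : 0 <= D) by (unfold D; nra).
assert (hs := sqrt_pos D).
assert (hss := sqrt_sqrt D hD).
assert (h1 : (2*c*s - b)*(2*c*s-b) <= D).
{ unfold D. assert (0 <= c * (m - (c * s * s - b * s))) by (apply Rmult_le_pos; lra). nra. }
assert (h2 : 2 * c * s - b <= sqrt D).
{ destruct (Rle_or_lt (2 * c * s - b) (sqrt D)) as [H|H]; [exact H|].
  exfalso. assert (sqrt D * sqrt D < (2*c*s - b)*(2*c*s-b)) by (apply Rmult_le_0_lt_compat; lra). lra. }
apply Rmult_le_reg_r with (2 * c); [lra|].
unfold Rdiv; rewrite Rmult_assoc Rinv_l ?Rmult_1_r; lra.
Qed.

Lemma final_core (r b N S E : R) : 2 <= r -> 0 <= b -> b * b = 2 * r ->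
  N = r^3 + r^2 + r + 1 -> 0 <= S -> S <= N -> 0 <= E -> E <= r^2 + 1 ->
  (N * N * E - N * (S * S) * (r + 1)) * (N * N * E - N * (S * S) * (r + 1))
  <= 2 * r * ((N * S * (N - S)) * (N * S * (N - S))) ->
  S <= (b + sqrt (2 * r + 4 * (r ^ 2 + 1) * ((r + b + 1) / (r ^ 3 + r ^ 2 + r + 1)))) /
        (2 * ((r + b + 1) / (r ^ 3 + r ^ 2 + r + 1))).
Proof.
move=> hr hb0 hbb hN hS0 hS hE0 hE h.
have hNp : 0 < N by rewrite hN; nra.
have hsig : 0 <= S * (N - S) by nra.
have hX : (N * E - S * S * (r + 1)) * (N * E - S * S * (r + 1)) <= b * b * ((S * (N - S)) * (S * (N - S))).
  rewrite hbb.
  apply Rmult_le_reg_l with (N * N); first nra.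
  have -> : N * N * ((N * E - S * S * (r + 1)) * (N * E - S * S * (r + 1))) =
    (N * N * E - N * (S * S) * (r + 1)) * (N * N * E - N * (S * S) * (r + 1)) by ring.
  have -> : N * N * (2 * r * (S * (N - S) * (S * (N - S)))) =
    2 * r * ((N * S * (N - S)) * (N * S * (N - S))) by ring.
  exact h.
have hX2 : - (b * (S * (N - S))) <= N * E - S * S * (r + 1).
  case: (Rle_or_lt (- (b * (S * (N - S)))) (N * E - S * S * (r + 1))) => // H.
  exfalso.
  have : (b * (S * (N - S))) * (b * (S * (N - S))) <
     (N * E - S * S * (r + 1)) * (N * E - S * S * (r + 1)).
    have -> : (N * E - S * S * (r + 1)) * (N * E - S * S * (r + 1)) =
      (- (N * E - S * S * (r + 1))) * (- (N * E - S * S * (r + 1))) by ring.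
    apply Rmult_le_0_lt_compat; nra.
  nra.
rewrite -hN.
have hNc : N * ((r + b + 1) / N) = r + b + 1 by field; lra.
have hc : 0 < (r + b + 1) / N by apply Rdiv_lt_0_compat; nra.
have hb2 : 2 * r = b * b by lra.
rewrite hb2.
apply: quad_root => //; first by nra.
apply Rmult_le_reg_l with N => //.
rewrite Rmult_0_r.
have -> : N * ((r + b + 1) / N * S * S - b * S - (r ^ 2 + 1)) =
   (N * ((r + b + 1) / N)) * S * S - N * b * S - N * (r ^ 2 + 1) by ring.
rewrite hNc.
nra.
Qed.

Lemma final_bound (q s e n : nat) : (2 <= q)%nat -> n = (q*q*q+q*q+q+1)%nat -> (s <= n)%nat ->
  (e <= q*q+1)%nat ->
  (INR (n*n*e) - INR (n*(s*s)*(q+1))) * (INR (n*n*e) - INR (n*(s*s)*(q+1)))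
  <= INR (2 * q) * ((INR (n * s) * (INR n - INR s)) * (INR (n * s) * (INR n - INR s))) ->
  INR s <= wq_bound q.
Proof.
move=> /leP hq hn /leP hsn /leP he h.
rewrite -?multE -?plusE in hn he h.
rewrite /wq_bound.
have hr : 2 <= INR q by apply (le_INR 2 q) in hq; simpl in hq; lra.
have hb0 := sqrt_pos (2 * INR q).
have hbb := sqrt_sqrt (2 * INR q) ltac:(lra).
move: hb0 hbb; move: (sqrt (2 * INR q)) => b hb0 hbb.
apply: (@final_core (INR q) b (INR n) (INR s) (INR e)) => //.
- by rewrite hn !plus_INR !mult_INR /=; lra.
- exact: pos_INR.
- by apply le_INR.
- exact: pos_INR.
- by apply le_INR in he; rewrite plus_INR !mult_INR /= in he; lra.
- move: h; rewrite !mult_INR plus_INR /= => H; nra.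
Qed.

End StdPart.
From mathcomp Require Import ring lra zify.
From mathcomp Require Import Rstruct.
Set Implicit Arguments.
Unset Strict Implicit.
Unset Printing Implicit Defensive.
Import Order.TTheory GRing.Theory Num.Theory.
Local Open Scope ring_scope.
Lemma sqbound (R : realFieldType) (b c : R) : 0 <= c -> b ^+ 2 <= c ^+ 2 -> `|b| <= c.
Proof.
move=> c0 h; rewrite -(ler_pXn2r (_ : (0 < 2)%N)) ?nnegrE ?normr_ge0 //.
by rewrite real_normK ?num_real.
Qed.

Section RealQ.
Variable R : realFieldType.
Variable P : finType.

Lemma sum_sq (a : P -> R) : (\sum_i a i) ^+ 2 = \sum_i \sum_j a i * a j.
Proof. by rewrite expr2 big_distrlr. Qed.

Definition bil (M : P -> P -> R) (f g : P -> R) := \sum_x \sum_y f x * M x y * g y.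

Lemma bil_expand (M : P -> P -> R) (f g : P -> R) (a c : R) :
  bil M (fun x => a * f x - c) (fun y => a * g y - c) =
  a^+2 * bil M f g - a * c * (\sum_x \sum_y f x * M x y)
  - a * c * (\sum_x \sum_y M x y * g y) + c^+2 * (\sum_x \sum_y M x y).
Proof.
rewrite /bil !mulr_sumr -!sumrB -big_split /=; apply: eq_bigr => x _.
rewrite !mulr_sumr -!sumrB -big_split /=; apply: eq_bigr => y _.
ring.
Qed.

Lemma sumsq_expand (f : P -> R) (a c : R) :
  \sum_x (a * f x - c) ^+ 2 = a^+2 * \sum_x f x ^+ 2 - 2 * a * c * \sum_x f x + c^+2 * #|P|%:R.
Proof.
have -> : c^+2 * #|P|%:R = \sum_(x : P) c^+2 by rewrite sumr_const mulr_natr.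
rewrite !mulr_sumr -!sumrB -big_split /=.
by apply: eq_bigr => x _; ring.
Qed.

Lemma sq_expand (M : P -> P -> R) (G : P -> R) :
  \sum_y (\sum_x G x * M x y) ^+ 2 =
  \sum_x \sum_z G x * G z * (\sum_y M x y * M z y).
Proof.
under eq_bigr => y _ do rewrite sum_sq.
rewrite exchange_big /=; apply: eq_bigr => x _.
rewrite exchange_big /=; apply: eq_bigr => z _.
by rewrite mulr_sumr; apply: eq_bigr => y _; ring.
Qed.

Lemma quad_diag (G : P -> R) (c1 c2 : R) (N : P -> P -> R)
  (hN : forall x y, N x y = (x == y)%:R * c1 + c2) :
  \sum_x \sum_y G x * G y * N x y = c1 * \sum_x G x ^+ 2 + c2 * (\sum_x G x) ^+ 2.
Proof.
rewrite sum_sq.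
transitivity (\sum_x ((\sum_y G x * G y * (x == y)%:R) * c1 + c2 * \sum_y G x * G y)).
  apply: eq_bigr => x _; rewrite mulr_suml mulr_sumr -big_split /=.
  by apply: eq_bigr => y _; rewrite hN; ring.
rewrite big_split /= -mulr_suml -mulr_sumr mulrC; congr (_ * _ + _).
apply: eq_bigr => x _; rewrite (bigD1 x) //= eqxx big1 ?addr0; first by rewrite mulr1.
by move=> y; rewrite eq_sym => /negPf->; rewrite mulr0.
Qed.

Lemma CS (a b : P -> R) :
  (\sum_i a i * b i) ^+ 2 <= (\sum_i a i ^+ 2) * (\sum_i b i ^+ 2).
Proof.
set A := \sum_i a i ^+ 2; set B := \sum_i b i ^+ 2; set C := \sum_i a i * b i.
have B0 : 0 <= B by apply: sumr_ge0 => i _; exact: sqr_ge0.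
have : 0 <= \sum_i (B * a i - C * b i) ^+ 2 by apply: sumr_ge0 => i _; exact: sqr_ge0.
have -> : \sum_i (B * a i - C * b i) ^+ 2 = B * (A * B - C ^+ 2).
  transitivity (\sum_i (B^+2 * a i ^+ 2 - (2 * B * C) * (a i * b i) + C^+2 * b i ^+2)).
    by apply: eq_bigr => i _; ring.
  rewrite big_split /= sumrB -!mulr_sumr -/A -/B -/C; ring.
have [Be|Bn0] := eqVneq B 0.
  have b0 : forall i, b i = 0.
    move=> i; apply/eqP; rewrite -sqrf_eq0; apply/eqP.
    by apply: (psumr_eq0P (P := predT) (F := fun j => b j ^+ 2)) => // j _; exact: sqr_ge0.
  have -> : C = 0 by rewrite /C big1 // => i _; rewrite b0 mulr0.
  by rewrite Be expr0n /= mulr0.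
have Bp : 0 < B by rewrite lt_def Bn0 B0.
by rewrite pmulr_rge0 // subr_ge0 mulrC.
Qed.
End RealQ.
Section Comb.
Variables (P : finType) (q : nat) (K A : P -> P -> bool).
Hypotheses (Ksym : forall x y, K x y = K y x) (Krefl : forall x, K x x)
 (K2 : forall x, #|[set y | K x y]| = (q^2+q+1)%N)
 (K3 : forall x z, x != z -> #|[set y | K x y && K z y]| = (q+1)%N)
 (A1 : forall x z, #|[set y | A x y && A z y]| = (K x z + q * (x == z))%N)
 (Asym : forall x y, A x y = A y x).

Lemma A2 y : #|[set x | A x y]| = (q+1)%N.
Proof.
have := A1 y y; rewrite Krefl eqxx muln1 add1n addn1 => <-.
by apply: eq_card => x; rewrite !inE andbb Asym.
Qed.

Lemma on_line_K u v w : A u w -> A v w -> K u v.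
Proof.
move=> Auw Avw; have [->|nuv] := eqVneq u v; first exact: Krefl.
case Kuv: (K u v) => //.
have := A1 u v; rewrite Kuv (negPf nuv) muln0 add0n => /eqP; rewrite cards_eq0.
by move/eqP/setP/(_ w); rewrite !inE Auw Avw.
Qed.

Lemma uniq_line u v w1 w2 : u != v -> K u v -> A u w1 -> A v w1 ->
  A u w2 -> A v w2 -> w1 = w2.
Proof.
move=> nuv Kuv a1 b1 a2 b2.
have := A1 u v; rewrite Kuv (negPf nuv) muln0 addn0 => /eqP/cards1P[w hw].
have : w1 \in [set w]  by rewrite -hw inE a1 b1.
have : w2 \in [set w]  by rewrite -hw inE a2 b2.
by rewrite !inE => /eqP-> /eqP->.
Qed.

Lemma abs_nonK x y : x != y -> A x x -> A y y -> ~~ K x y.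
Proof.
move=> nxy Axx Ayy; apply/negP => Kxy.
have := A1 x y; rewrite Kxy (negPf nxy) muln0 addn0 => /eqP/cards1P[w hw].
have : w \in [set w] by rewrite inE.
rewrite -hw inE => /andP[Axw Ayw].
have noAxy : ~~ A x y.
  apply/negP => Axy.
  have Ayx : A y x by rewrite Asym.
  by have := uniq_line nxy Kxy Axx Ayx Axy Ayy; move/eqP; rewrite (negPf nxy).
have [ewx|nwx] := eqVneq w x.
  by move: Ayw noAxy; rewrite ewx Asym => ->.
have [ewy|nwy] := eqVneq w y.
  by move: Axw noAxy; rewrite ewy => ->.
have Kwx : K w x by apply: (on_line_K (w := x)); rewrite // Asym.
have Kwy : K w y by apply: (on_line_K (w := y)); rewrite // Asym.
have sub : [set u | A u w] \subset [set u | K x u && K y u].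
  apply/subsetP => u; rewrite !inE => Auw.
  by rewrite !(Ksym _ u) (on_line_K Auw Axw) (on_line_K Auw Ayw).
have eqs : [set u | A u w] = [set u | K x u && K y u].
  apply/eqP; rewrite eqEcard sub A2 (K3 nxy).
  by rewrite leqnn.
have : w \in [set u | K x u && K y u] by rewrite inE !(Ksym _ w) Kwx Kwy.
rewrite -eqs inE => Aww.
have Kxw : K x w by rewrite Ksym.
have nxw : x != w by rewrite eq_sym.
have Awx : A w x by rewrite Asym.
by have := uniq_line nxw Kxw Axw Aww Axx Awx; move/eqP; rewrite (negPf nwx).
Qed.

Lemma card_sumb (T : finType) (p : pred T) : #|[set y | p y]| = (\sum_y (p y : nat))%N.
Proof. by rewrite -sum1_card big_mkcond /=; apply: eq_bigr => y _; rewrite inE; case: (p y). Qed.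

Variable x0 : P.

Lemma card_P : #|P| = (q^3+q^2+q+1)%N.
Proof.
pose k := (q^2+q+1)%N.
have h1 : (\sum_z #|[set y | K x0 y && K z y]| = k * k)%N.
  transitivity (\sum_z \sum_y ((K x0 y : nat) * K z y))%N.
    by apply: eq_bigr => z _; rewrite card_sumb; apply: eq_bigr => y _; rewrite mulnb.
  rewrite exchange_big /=.
  transitivity (\sum_y ((K x0 y : nat) * k))%N.
    apply: eq_bigr => y _; rewrite -big_distrr /=; congr (_ * _)%N.
    by rewrite /k -(K2 y) card_sumb; apply: eq_bigr => z _; rewrite Ksym.
  by rewrite -big_distrl /= -card_sumb K2.
have h2 : (\sum_z #|[set y | K x0 y && K z y]| = k + (#|P| - 1) * (q+1))%N.
  rewrite (bigD1 x0) //=; congr (_ + _)%N.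
    by rewrite /k -(K2 x0); apply: eq_card => y; rewrite !inE andbb.
  rewrite (eq_bigr (fun _ => (q+1)%N)) => [|z nz]; last by rewrite K3 // eq_sym.
  by rewrite sum_nat_const cardC1 subn1.
have h3 : ((#|P| - 1) * (q+1) = k * q * (q + 1))%N.
  apply/eqP; rewrite -(eqn_add2l k) -h2 h1 /k; apply/eqP; ring.
have e1 : (#|P| - 1 = k * q)%N.
  apply/eqP; rewrite -(eqn_pmul2r (_ : 0 < q + 1)%N) ?addn1 //.
  by move: h3; rewrite addn1 => ->.
have H0 : (0 < #|P|)%N by apply/card_gt0P; exists x0.
by rewrite -(subnK H0) e1 /k; ring.
Qed.


Section Main.
Variable R : realFieldType.
Let kr (x y : P) : R := (K x y)%:R.
Let ar (x y : P) : R := (A x y)%:R.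
Let n := #|P|.

Lemma sumb_card (p : pred P) : \sum_x ((p x)%:R : R) = #|[set x | p x]|%:R.
Proof. by rewrite card_sumb natr_sum; apply: eq_bigr => x _; case: (p x). Qed.

Lemma natbM (b1 b2 : bool) : (b1%:R * b2%:R : R) = (b1 && b2)%:R.
Proof. by case: b1; case: b2; rewrite ?mulr0 ?mul0r ?mulr1. Qed.

Lemma Krow x : \sum_y kr x y = (q^2+q+1)%:R.
Proof. by rewrite /kr sumb_card K2. Qed.

Lemma Kcol y : \sum_x kr x y = (q^2+q+1)%:R.
Proof. by rewrite -(Krow y); apply: eq_bigr => x _; rewrite /kr Ksym. Qed.

Lemma Arow x : \sum_y ar x y = (q+1)%:R.
Proof.
rewrite /ar sumb_card -(A2 x); congr (_%:R); apply: eq_card => y.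
by rewrite !inE Asym.
Qed.

Lemma Acol y : \sum_x ar x y = (q+1)%:R.
Proof. by rewrite /ar sumb_card A2. Qed.

Lemma KK y z : \sum_x kr y x * kr z x = (y == z)%:R * (q^2)%:R + (q+1)%:R.
Proof.
rewrite /kr; under eq_bigr => x _ do rewrite natbM.
rewrite sumb_card; have [<-|nyz] := eqVneq y z.
  rewrite mul1r -natrD; congr (_%:R); rewrite addnA -(K2 y).
  by apply: eq_card => x; rewrite !inE andbb.
by rewrite mul0r add0r K3.
Qed.

Lemma AA x z : \sum_y ar x y * ar z y = kr x z + (x == z)%:R * q%:R.
Proof.
rewrite /ar; under eq_bigr => y _ do rewrite natbM.
by rewrite sumb_card A1 natrD natrM mulrC.
Qed.

Lemma Kbound (G : P -> R) : \sum_x G x = 0 -> `|bil kr G G| <= q%:R * \sum_x G x ^+ 2.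
Proof.
move=> G0.
have e : bil kr G G = \sum_x G x * (\sum_y G y * kr y x).
  rewrite /bil; apply: eq_bigr => x _; rewrite mulr_sumr; apply: eq_bigr => y _.
  by rewrite /kr Ksym; ring.
have cs := CS G (fun x => \sum_y G y * kr y x).
rewrite -e sq_expand in cs.
rewrite (@quad_diag _ _ G _ _ _ KK) in cs.
rewrite G0 expr0n /= mulr0 addr0 in cs.
have S0 : 0 <= \sum_x G x ^+ 2 by apply: sumr_ge0 => x _; exact: sqr_ge0.
have q0 : 0 <= (q%:R : R) by [].
apply: sqbound; first by rewrite mulr_ge0.
apply: (le_trans cs); rewrite natrX le_eqVlt; apply/orP; left; apply/eqP; ring.
Qed.

Lemma bil_set (M : P -> P -> bool) (T : {set P}) :
  (forall x y, x \in T -> y \in T -> x != y -> ~~ M x y) ->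
  bil (fun x y => (M x y)%:R : R) (fun x => (x \in T)%:R) (fun x => (x \in T)%:R)
  = #|[set x in T | M x x]|%:R.
Proof.
move=> hT; rewrite /bil.
transitivity (\sum_x ((x \in T) && M x x)%:R : R); last first.
  by rewrite sumb_card.
apply: eq_bigr => x _; rewrite (bigD1 x) //= big1 ?addr0.
  by case: (x \in T); case: (M x x); rewrite ?mulr0 ?mul0r ?mulr1 ?mul1r.
move=> y nyx; case xT : (x \in T); last by rewrite !mul0r.
case yT : (y \in T); last by rewrite mulr0.
by rewrite (negPf (hT x y xT yT _)) ?mulr0 ?mul0r // eq_sym.
Qed.

Lemma sum_chi (T : {set P}) : \sum_x ((x \in T)%:R : R) = #|T|%:R.
Proof. by rewrite sumb_card; congr (_%:R); apply: eq_card => x; rewrite inE. Qed.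

Lemma sum_chi2 (T : {set P}) : \sum_x ((x \in T)%:R : R) ^+ 2 = #|T|%:R.
Proof. by rewrite -sum_chi; apply: eq_bigr => x _; case: (x \in T); rewrite ?expr0n ?expr1n. Qed.

Lemma rowsum_chi (M : P -> P -> R) (c : R) (T : {set P}) :
  (forall x, \sum_y M x y = c) ->
  \sum_x \sum_y (x \in T)%:R * M x y = #|T|%:R * c.
Proof.
move=> h; rewrite -sum_chi mulr_suml; apply: eq_bigr => x _.
by rewrite -mulr_sumr h.
Qed.

Lemma colsum_chi (M : P -> P -> R) (c : R) (T : {set P}) :
  (forall y, \sum_x M x y = c) ->
  \sum_x \sum_y M x y * (y \in T)%:R = #|T|%:R * c.
Proof.
move=> h; rewrite exchange_big /= -sum_chi mulr_suml; apply: eq_bigr => y _.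
by rewrite -mulr_suml h mulrC.
Qed.

Lemma allsum (M : P -> P -> R) (c : R) :
  (forall x, \sum_y M x y = c) -> \sum_x \sum_y M x y = n%:R * c.
Proof. by move=> h; rewrite (eq_bigr (fun _ => c)) // sumr_const mulr_natl. Qed.


Lemma ovoid : (#|[set x | A x x]| * (q+1) <= n)%N.
Proof.
set O := [set x | A x x]; set m := #|O|.
have hO : forall x y, x \in O -> y \in O -> x != y -> ~~ K x y.
  by move=> x y; rewrite !inE => ? ? ?; exact: abs_nonK.
pose chi x : R := (x \in O)%:R.
pose G x := n%:R * chi x - m%:R.
have G0 : \sum_x G x = 0.
  by rewrite /G sumrB -mulr_sumr sum_chi sumr_const -mulr_natr; ring.
have hb := Kbound G0.
have e1 : bil kr G G = n%:R^+2 * m%:R - n%:R * m%:R * (m%:R * (q^2+q+1)%:R)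
    - n%:R * m%:R * (m%:R * (q^2+q+1)%:R) + m%:R^+2 * (n%:R * (q^2+q+1)%:R).
  rewrite /G bil_expand (bil_set hO) (rowsum_chi _ Krow) (colsum_chi _ Kcol) (allsum Krow).
  congr (_ * _%:R - _ - _ + _); apply: eq_card => x; rewrite !inE.
  by case: (A x x); rewrite ?Krefl.
have eS : \sum_x G x ^+ 2 = n%:R^+2 * m%:R - 2 * n%:R * m%:R * m%:R + m%:R^+2 * n%:R.
  by rewrite /G sumsq_expand sum_chi2 sum_chi.
have h0 : 0 <= bil kr G G + q%:R * \sum_x G x ^+ 2.
  by move: hb; rewrite ler_norml => /andP[h _]; lra.
have key : (n * m * (q+1))%:R * (n%:R - (m * (q+1))%:R) = bil kr G G + q%:R * \sum_x G x ^+ 2.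
  by rewrite e1 eS !natrM !natrD natrX; ring.
rewrite -key in h0.
have [m0|mpos] := posnP m; first by rewrite m0.
have np : (0 < n)%N by apply/card_gt0P; exists x0.
rewrite pmulr_rge0 ?ltr0n ?muln_gt0 ?np ?mpos ?addn1 // subr_ge0 ler_nat in h0.
by rewrite addn1.
Qed.

Lemma mixing (S : {set P}) :
  (forall x y, x \in S -> y \in S -> x != y -> ~~ A x y) ->
  ((n^2 * #|[set x in S | A x x]|)%:R - (n * #|S|^2 * (q+1))%:R)^+2
    <= (2*q)%:R * ((n * #|S|)%:R * (n%:R - #|S|%:R))^+2 :> R.
Proof.
move=> indep; set s := #|S|; set e := #|[set x in S | A x x]|.
pose chi x : R := (x \in S)%:R.
pose G x := n%:R * chi x - s%:R.
have G0 : \sum_x G x = 0.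
  by rewrite /G sumrB -mulr_sumr sum_chi sumr_const -mulr_natr; ring.
have e1 : bil ar G G = n%:R^+2 * e%:R - n%:R * s%:R * (s%:R * (q+1)%:R)
    - n%:R * s%:R * (s%:R * (q+1)%:R) + s%:R^+2 * (n%:R * (q+1)%:R).
  by rewrite /G bil_expand (bil_set indep) (rowsum_chi _ Arow) (colsum_chi _ Acol) (allsum Arow).
have eS : \sum_x G x ^+ 2 = n%:R^+2 * s%:R - 2 * n%:R * s%:R * s%:R + s%:R^+2 * n%:R.
  by rewrite /G sumsq_expand sum_chi2 sum_chi.
have eH : bil ar G G = \sum_y (\sum_x G x * ar x y) * G y.
  rewrite /bil exchange_big /=; apply: eq_bigr => y _; rewrite mulr_suml.
  by apply: eq_bigr => x _.
have cs := CS (fun y => \sum_x G x * ar x y) G.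
rewrite -eH sq_expand in cs.
have eH2 : \sum_x \sum_z G x * G z * (\sum_y ar x y * ar z y)
   = bil kr G G + \sum_x \sum_z G x * G z * ((x == z)%:R * q%:R + 0).
  rewrite /bil -big_split; apply: eq_bigr => x _; rewrite -big_split; apply: eq_bigr => z _.
  by rewrite AA /=; ring.
rewrite eH2 (@quad_diag R P G q%:R 0 (fun x y => (x == y)%:R * q%:R + 0)) // in cs.
rewrite mul0r addr0 in cs.
have hb := Kbound G0.
have hb' : bil kr G G <= q%:R * \sum_x G x ^+ 2 := le_trans (ler_norm _) hb.
have S0 : 0 <= \sum_x G x ^+ 2 by apply: sumr_ge0 => x _; exact: sqr_ge0.
have cs2 : bil ar G G ^+ 2 <= (2 * q)%:R * (\sum_x G x ^+ 2) * (\sum_x G x ^+ 2).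
  apply: (le_trans cs); apply: ler_wpM2r => //; rewrite natrM; lra.
have -> : (n ^ 2 * e)%:R - (n * s ^ 2 * (q + 1))%:R = bil ar G G.
  by rewrite e1 !natrM natrD; ring.
have -> : (2 * q)%:R * ((n * s)%:R * (n%:R - s%:R)) ^+ 2
   = (2 * q)%:R * (\sum_x G x ^+ 2) * (\sum_x G x ^+ 2).
  by rewrite eS !natrM; ring.
exact: cs2.
Qed.

Lemma abstract_main (S : {set P}) :
  (forall x y, x \in S -> y \in S -> x != y -> ~~ A x y) ->
  [/\ (#|[set x in S | A x x]| <= q^2+1)%N, #|P| = (q^3+q^2+q+1)%N &
   ((n^2 * #|[set x in S | A x x]|)%:R - (n * #|S|^2 * (q+1))%:R)^+2
    <= (2*q)%:R * ((n * #|S|)%:R * (n%:R - #|S|%:R))^+2 :> R].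
Proof.
move=> ind; split; [|exact: card_P|exact: mixing].
have h1 : (#|[set x in S | A x x]| <= #|[set x | A x x]|)%N.
  by apply: subset_leq_card; apply/subsetP => x; rewrite !inE => /andP[].
have h2 := ovoid; rewrite /n card_P in h2.
move: h2; have -> : (q^3+q^2+q+1 = (q^2+1)*(q+1))%N by ring.
rewrite leq_pmul2r ?addn1 // => h2.
exact: leq_trans h1 h2.
Qed.
End Main.
End Comb.

Section Concrete.
Variable F : finFieldType.
Local Notation q := #|F|.
Local Notation rV := 'rV[F]_4.

Definition msset m (U : 'M[F]_(m, 4)) : {set rV} := [set w | (w <= U)%MS].

Lemma card_msset m (U : 'M[F]_(m, 4)) : #|msset U| = (q ^ \rank U)%N.
Proof.
rewrite -[\rank U]mul1n -card_mx.
have injA: injective (mulmxr (row_base U)).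
  have /row_freeP[A' A'K] := row_base_free U.
  by move=> ?; apply: can_inj (mulmxr A') _ => u; rewrite /= -mulmxA A'K mulmx1.
rewrite -(card_image (injA _)); apply: eq_card => v.
by rewrite inE -(eq_row_base U) (sameP submxP codomP).
Qed.

Lemma msset_sub m1 m2 (U1 : 'M[F]_(m1, 4)) (U2 : 'M[F]_(m2, 4)) :
  (msset U1 \subset msset U2) = (U1 <= U2)%MS.
Proof.
apply/subsetP/idP => [h|h w]; last by rewrite !inE => /submx_trans; apply.
apply/row_subP => i; have := h (row i U1); rewrite !inE; apply; exact: row_sub.
Qed.

Lemma msset_eq m1 m2 (U1 : 'M[F]_(m1, 4)) (U2 : 'M[F]_(m2, 4)) :
  (U1 :=: U2)%MS -> msset U1 = msset U2.
Proof. by move=> e; apply/setP => w; rewrite !inE e. Qed.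

Lemma rV_set (v : rV) : [set a *: v | a : F] = msset v.
Proof.
apply/setP => w; rewrite inE; apply/imsetP/sub_rVP => [[a _ ->]|[a ->]]; by exists a.
Qed.

Lemma span2_set (u v : rV) :
  [set a *: u + b *: v | a : F, b : F] = msset (col_mx u v).
Proof.
apply/setP => w; rewrite inE; apply/imset2P/idP => [[a b _ _ ->]|].
  have hu : (u <= col_mx u v)%MS by rewrite -addsmxE addsmxSl.
  have hv : (v <= col_mx u v)%MS by rewrite -addsmxE addsmxSr.
  by rewrite addmx_sub ?scalemx_sub.
case/submxP => x ->.
exists (lsubmx x 0 0) (rsubmx x 0 0) => //.
rewrite -{1}(hsubmxK x) mul_row_col.
by rewrite {1}(mx11_scalar (lsubmx x)) {1}(mx11_scalar (rsubmx x)) !mul_scalar_mx.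
Qed.

Lemma pointP (x : point F) : exists2 v : rV, v != 0 & val x = msset v.
Proof.
have := valP x; rewrite /is_point => /existsP[v /andP[nv /eqP e]].
by exists v; rewrite // e rV_set.
Qed.

Lemma card_point (x : point F) : #|val x| = q.
Proof. by have [v nv ->] := pointP x; rewrite card_msset rank_rV nv expn1. Qed.

Variable J : 'M[F]_4.

Lemma lineP (L : line J) : exists2 U : 'M[F]_(2, 4), \rank U = 2%N & val L = msset U.
Proof.
have := valP L; rewrite /is_line => /andP[/existsP[u /existsP[v /andP[r /eqP e]]] _].
by exists (col_mx u v); [apply/eqP | rewrite e span2_set].
Qed.

Lemma line_ti (L : line J) w1 w2 : w1 \in val L -> w2 \in val L -> bform J w1 w2 = 0.
Proof.
have := valP L; rewrite /is_line => /andP[_ /forall_inP h] h1 h2.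
by have /forall_inP/(_ w2 h2)/eqP := h w1 h1.
Qed.


Lemma bformDl (u v w : rV) : bform J (u + v) w = bform J u w + bform J v w.
Proof. by rewrite /bform !mulmxDl. Qed.
Lemma bformDr (u v w : rV) : bform J w (u + v) = bform J w u + bform J w v.
Proof. by rewrite /bform linearD /= mulmxDr. Qed.
Lemma bformZl a (v w : rV) : bform J (a *: v) w = a *: bform J v w.
Proof. by rewrite /bform -!scalemxAl. Qed.
Lemma bformZr a (v w : rV) : bform J w (a *: v) = a *: bform J w v.
Proof. by rewrite /bform linearZ /= scalemxAr. Qed.

Lemma bform_kerE (v w : rV) : (bform J v w == 0) = (w <= kermx (v *m J)^T)%MS.
Proof. by rewrite sub_kermx /bform -trmx_eq0 trmx_mul trmxK. Qed.

Hypothesis hJ : nondeg_alternating J.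

Lemma bform_skew (v w : rV) : bform J w v = - bform J v w.
Proof.
have := hJ.1 (v + w); rewrite bformDl !bformDr (hJ.1 v) (hJ.1 w) add0r addr0.
by move/eqP; rewrite addrC addr_eq0 => /eqP.
Qed.

Lemma vJ_neq0 (v : rV) : v != 0 -> v *m J != 0.
Proof.
move=> nv; apply: contraNneq nv => h.
by rewrite -(mulmxK hJ.2 v) h mul0mx.
Qed.

Lemma pt_proof (w : rV) : w != 0 -> is_point (msset w).
Proof. by move=> nw; apply/existsP; exists w; rewrite nw rV_set eqxx. Qed.

Lemma point_eq (x : point F) (w : rV) : w != 0 -> w \in val x -> val x = msset w.
Proof.
move=> nw; have [v nv ->] := pointP x; rewrite inE => wv.
apply: msset_eq; apply/eqmxP; rewrite wv /=.
have := mxrank_leqif_sup wv; rewrite !rank_rV nv nw => /leqifP.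
by case: ifP.
Qed.

Lemma count_points m (U : 'M[F]_(m, 4)) :
  (#|[set x : point F | val x \subset msset U]| * (q - 1) = q ^ \rank U - 1)%N.
Proof.
set W := msset U; set X := [set x : point F | val x \subset W].
have h0 : 0 \in W by rewrite inE sub0mx.
have -> : (q ^ \rank U - 1 = #|W :\ 0%R|)%N.
  by have := cardsD1 0%R W; rewrite h0 card_msset => ->; rewrite addKn.
rewrite -[#|W :\ 0%R|]sum1_card.
transitivity (\sum_(w in W :\ 0%R) \sum_(x in X) ((w \in val x) : nat))%N; last first.
  apply: eq_bigr => w; rewrite !inE => /andP[nw wU].
  have px := pt_proof nw.
  rewrite -[RHS](cards1 (exist _ (msset w) px : point F)) -sum1_card big_mkcond /=.
  rewrite [RHS]big_mkcond /=; apply: eq_bigr => x _; rewrite !inE.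
  case wx : (w \in val x).
    have ex : x = exist _ (msset w) px by apply: val_inj; rewrite /= (point_eq nw wx).
    by rewrite ex eqxx /= msset_sub wU.
  have nx : x != exist _ (msset w) px.
    by apply: contraFneq wx => ->; rewrite /= inE submx_refl.
  by rewrite (negPf nx); case: ifP.
rewrite exchange_big /= -sum_nat_const; apply: eq_bigr => x; rewrite inE => xW.
rewrite -big_mkcondr /=.
have [v nv ev] := pointP x.
rewrite sum1dep_card -(card_point x) (cardsD1 0 (val x)).
have -> : (0 : rV) \in val x by rewrite ev inE sub0mx.
rewrite add1n subSS subn0; apply: eq_card => w; rewrite !inE.
case wx : (w \in val x); rewrite ?andbF ?andbT //.
by have := subsetP xW w wx; rewrite inE => ->; rewrite andbT.
Qed.

Lemma q_gt1 : (1 < q)%N.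
Proof. exact: card_finNzRing_gt1. Qed.

Lemma count_rank2 m (U : 'M[F]_(m, 4)) : \rank U = 2%N ->
  #|[set x : point F | val x \subset msset U]| = (q + 1)%N.
Proof.
move=> rU; have := count_points U; rewrite rU => h.
have q1 := q_gt1.
apply/eqP; rewrite -(eqn_pmul2r (_ : 0 < q - 1)%N); last by lia.
by rewrite h; apply/eqP; nia.
Qed.

Lemma count_rank3 m (U : 'M[F]_(m, 4)) : \rank U = 3%N ->
  #|[set x : point F | val x \subset msset U]| = (q^2 + q + 1)%N.
Proof.
move=> rU; have := count_points U; rewrite rU => h.
have q1 := q_gt1.
apply/eqP; rewrite -(eqn_pmul2r (_ : 0 < q - 1)%N); last by lia.
by rewrite h; apply/eqP; nia.
Qed.

Definition Kc (x y : point F) : bool :=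
  [forall v in val x, forall w in val y, bform J v w == 0].

Lemma KcE (x y : point F) (v w : rV) : val x = msset v -> val y = msset w ->
  Kc x y = (bform J v w == 0).
Proof.
move=> ex ey; apply/forall_inP/eqP => [h|h v1 v1x].
  have := h v; rewrite ex inE submx_refl => /(_ isT)/forall_inP/(_ w).
  by rewrite ey inE submx_refl => /(_ isT)/eqP.
apply/forall_inP => w1; rewrite ey inE => /sub_rVP[b ->].
move: v1x; rewrite ex inE => /sub_rVP[a ->].
by rewrite bformZl bformZr h !scaler0.
Qed.

Lemma Kc_sym x y : Kc x y = Kc y x.
Proof.
have [v _ ev] := pointP x; have [w _ ew] := pointP y.
by rewrite (KcE ev ew) (KcE ew ev) bform_skew oppr_eq0.
Qed.

Lemma Kc_refl x : Kc x x.
Proof. by have [v _ ev] := pointP x; rewrite (KcE ev ev) hJ.1. Qed.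

Lemma Kc_sub (x y : point F) (v : rV) : val x = msset v ->
  Kc x y = (val y \subset msset (kermx (v *m J)^T)).
Proof.
move=> ev; have [w _ ew] := pointP y.
by rewrite (KcE ev ew) ew msset_sub bform_kerE.
Qed.

Lemma Kc_K2 x : #|[set y | Kc x y]| = (q^2 + q + 1)%N.
Proof.
have [v nv ev] := pointP x.
rewrite -(count_rank3 (U := kermx (v *m J)^T)).
  by apply: eq_card => y; rewrite !inE (Kc_sub _ ev).
by rewrite mxrank_ker mxrank_tr rank_rV vJ_neq0.
Qed.

Lemma rank2 (v v' : rV) : v != 0 -> ~~ (v' <= v)%MS -> \rank (col_mx v v') = 2%N.
Proof.
move=> nv nv'.
rewrite -(addsmxE v v').
have h1 := mxrank_leqif_sup (addsmxSl v v').
have : (v + v' <= v)%MS = false by rewrite addsmx_sub submx_refl (negPf nv').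
move=> e; rewrite e in h1.
have lt := ltn_leqif h1; rewrite /= rank_rV nv in lt.
have le : (\rank (v + v')%MS <= 2)%N.
  by rewrite (addsmxE v v'); exact: (rank_leq_row (col_mx v v')).
by apply/eqP; rewrite eqn_leq le lt.
Qed.

Lemma pts_indep (x z : point F) (v v' : rV) : x != z -> val x = msset v -> val z = msset v' ->
  v' != 0 -> ~~ (v' <= v)%MS.
Proof.
move=> nxz ev ev' nv'; apply: contra nxz => h.
apply/eqP/val_inj; rewrite ev'; apply: point_eq => //.
by rewrite ev inE.
Qed.

Lemma msset_ker2 (v v' : rV) :
  msset (kermx (v *m J)^T) :&: msset (kermx (v' *m J)^T) =
  msset (kermx (col_mx v v' *m J)^T).
Proof.
apply/setP => w; rewrite !inE !sub_kermx.
by rewrite mul_col_mx tr_col_mx mul_mx_row row_mx_eq0.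
Qed.

Lemma Kc_K3 x z : x != z -> #|[set y | Kc x y && Kc z y]| = (q + 1)%N.
Proof.
move=> nxz.
have [v nv ev] := pointP x; have [v' nv' ev'] := pointP z.
have ind := pts_indep nxz ev ev' nv'.
rewrite -(count_rank2 (U := kermx (col_mx v v' *m J)^T)).
  apply: eq_card => y; rewrite !inE (Kc_sub _ ev) (Kc_sub _ ev') -subsetI.
  by rewrite msset_ker2.
rewrite mxrank_ker mxrank_tr mxrankMfree ?rank2 //.
by rewrite row_free_unit hJ.2.
Qed.

Variables (sp : point F -> line J) (sl : line J -> point F).
Hypothesis hpol : polarity sp sl.

Definition Ac (x y : point F) : bool := incident x (sp y).

Lemma Ac_sym x y : Ac x y = Ac y x.
Proof.
have [h1 [h2 h3]] := hpol.
by apply/idP/idP => H; [have := (h3 x (sp y)).1 H | have := (h3 y (sp x)).1 H]; rewrite h1.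
Qed.

Lemma card_reindex (Pr : line J -> bool) : #|[set y | Pr (sp y)]| = #|[set L | Pr L]|.
Proof.
have [h1 [h2 h3]] := hpol.
rewrite -[RHS](card_imset _ (can_inj h2)); apply: eq_card => y; rewrite inE.
apply/idP/imsetP => [H|[L hL ->]]; first by exists (sp y); rewrite ?inE ?h1.
by rewrite h2; move: hL; rewrite inE.
Qed.

Lemma sub_col_l (v v' : rV) : (v <= col_mx v v')%MS.
Proof. by rewrite -addsmxE addsmxSl. Qed.
Lemma sub_col_r (v v' : rV) : (v' <= col_mx v v')%MS.
Proof. by rewrite -addsmxE addsmxSr. Qed.

Lemma Ac_A1 x z : #|[set y | Ac x y && Ac z y]| = (Kc x z + q * (x == z))%N.
Proof.
have [->|nxz] := eqVneq x z.
  rewrite Kc_refl.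
  transitivity #|[set y : point F | val y \subset val (sp z)]|.
    by apply: eq_card => y; rewrite !inE andbb Ac_sym.
  by have [U rU ->] := lineP (sp z); rewrite count_rank2 //= muln1 addnC.
rewrite muln0 addn0.
have [v nv ev] := pointP x; have [v' nv' ev'] := pointP z.
transitivity #|[set L : line J | (val x \subset val L) && (val z \subset val L)]|.
  exact: (card_reindex (fun L => (val x \subset val L) && (val z \subset val L))).
case Kxz : (Kc x z).
  have ind := pts_indep nxz ev ev' nv'.
  have r2 := rank2 nv ind.
  have b0 : bform J v v' = 0 by apply/eqP; rewrite -(KcE ev ev').
  have isl : is_line J (msset (col_mx v v')).
    rewrite /is_line; apply/andP; split.
      by apply/existsP; exists v; apply/existsP; exists v'; rewrite r2 span2_set !eqxx.
    apply/forall_inP => w1; rewrite -(span2_set v v') => /imset2P[a b _ _ ->].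
    apply/forall_inP => w2 /imset2P[c d _ _ ->].
    rewrite !bformDl !bformDr !bformZl !bformZr !(hJ.1) (bform_skew v v') b0.
    by rewrite oppr0 !scaler0 !addr0.
  apply/eqP/cards1P; exists (exist (fun L => is_line J L) (msset (col_mx v v')) isl : line J); apply/setP => L; rewrite !inE.
  apply/andP/eqP => [[hx hz]|->]; last first.
    by rewrite /= ev ev' !msset_sub sub_col_l sub_col_r.
  have [U rU eU] := lineP L.
  rewrite eU ev ev' !msset_sub in hx hz.
  have sub : (col_mx v v' <= U)%MS by rewrite col_mx_sub hx hz.
  have := mxrank_leqif_eq sub; rewrite r2 rU => /leqifP; case: ifP => // e _.
  by apply: val_inj; rewrite /= eU; apply/esym/msset_eq/eqmxP.
apply/eqP; rewrite cards_eq0; apply/eqP/setP => L; rewrite !inE.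
apply/negbTE/negP => /andP[hx hz].
have vL : v \in val L by apply: (subsetP hx); rewrite ev inE submx_refl.
have v'L : v' \in val L by apply: (subsetP hz); rewrite ev' inE submx_refl.
by move: Kxz; rewrite (KcE ev ev') (line_ti vL v'L) eqxx.
Qed.
End Concrete.

Theorem mainTheorem11 (F : finFieldType) (J : 'M[F]_4)
  (hJ : nondeg_alternating J)
  (sp : point F -> line J) (sl : line J -> point F)
  (hpol : polarity sp sl)
  (S : {set point F}) (hS : pol_independent sp S) :
  Rdefinitions.Rle (Raxioms.INR #|S|) (wq_bound #|F|).
Proof.
pose v0 : 'rV[F]_4 := const_mx 1.
have nv0 : v0 != 0.
  apply/eqP => /matrixP/(_ 0 0); rewrite !mxE => /eqP; by rewrite oner_eq0.
pose x0 : point F := exist _ (msset v0) (pt_proof nv0).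
have ind : forall x y, x \in S -> y \in S -> x != y -> ~~ Ac sp x y.
  by move=> x y xS yS nxy; have := hS x y xS yS nxy.
have [he hn hmix] := abstract_main (Kc_sym hJ) (Kc_refl hJ) (Kc_K2 hJ) (Kc_K3 hJ)
   (Ac_A1 hJ hpol) (Ac_sym hpol) x0 Rdefinitions.R ind.
have hq := q_gt1 F.
have hsn := max_card S.
apply: (StdPart.final_bound _ _ #|[set x in S | Ac sp x x]| _ hq _ hsn).
- by rewrite hn; ring.
- by move: he; rewrite !expnS expn0 muln1.
- move/RleP: hmix; rewrite !expr2 -!INRE !expnS expn0 !muln1 => hmix.
  exact hmix.
Qed.
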